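(* Let $G$ be a maximal outerplanar graph with at least four vertices. Let $uv$ be an edge on its outer face with $\deg_G(u)>2$ and $\deg_G(v)>2$, let $w=\Delta(uv)$, and let $G_u=G_u(uv)$ and $G_v=G_v(uv)$ be the $uv$-segments. If $\mathrm{mvc}(G)=\mathrm{mvc}(G_u)+\mathrm{mvc}(G_v)$, then $$\mathrm{mvc}_u(G)=\min\{\mathrm{mvc}_u(G_u)+\mathrm{mvc}(G_v),\ \mathrm{mvc}(G_u)+\mathrm{mvc}_w(G_v),\ \mathrm{mvc}(G)+1\},$$ $$\mathrm{mvc}_v(G)=\min\{\mathrm{mvc}(G_u)+\mathrm{mvc}_v(G_v),\ \mathrm{mvc}_w(G_u)+\mathrm{mvc}(G_v),\ \mathrm{mvc}(G)+1\},$$ $$\mathrm{mvc}_{uv}(G)=\min\{\mathrm{mvc}_u(G_u)+\mathrm{mvc}_v(G_v),\ \mathrm{mvc}(G)+1\}.$$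
   Context: All graphs are finite and simple. A maximal outerplanar graph is an outerplanar graph to which no edge between existing vertices can be added while keeping it outerplanar. A fixed outerplanar embedding, with all vertices on the outer face, is assumed. For $S\subseteq V(G)$, $\mathrm{mvc}_S(G)$ is the minimum size of a vertex cover of $G$ containing $S$, and $\mathrm{mvc}(G)=\mathrm{mvc}_\emptyset(G)$. Braces are dropped for small sets, e.g. $\mathrm{mvc}_{uw}(G)=\mathrm{mvc}_{\{u,w\}}(G)$. For an edge $uv$ on the outer face of a maximal outerplanar graph with at least three vertices, $\Delta(uv)$ is the unique common neighbor of $u$ and $v$. $uv$-segments: let $w=\Delta(uv)$. $G_u(uv)$ is the maximal biconnected outerplanar subgraph of $G$ that has $uw$ on its outer face and does not contain $v$. Equivalently, it is the subgraph induced by $u$, $w$ and the vertices on the side of edge $uw$ not containing $v$; it is the single edge $uw$ if $\deg_G(u)=2$. $G_v(uv)$ is defined symmetrically. *)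

(* Defs.v *)
From mathcomp Require Import all_boot.
Set Implicit Arguments. Unset Strict Implicit. Unset Printing Implicit Defensive.

Definition simple_graph (T : finType) (e : rel T) : Prop :=
  symmetric e /\ irreflexive e.

Definition deg (T : finType) (e : rel T) (x : T) : nat := #|[set y | e x y]|.

(* A cyclic ordering s of all vertices (outer-face order) such that no two
   edges cross when drawn as chords of a convex polygon in the order s. *)
Definition outerplanar_order (T : finType) (e : rel T) (s : seq T) : Prop :=
  [/\ uniq s, (forall x : T, x \in s) &
      forall a b c d : T,
        index a s < index b s -> index b s < index c s -> index c s < index d s ->
        e a c -> e b d -> False].

Definition outerplanar (T : finType) (e : rel T) : Prop :=
  exists s : seq T, outerplanar_order e s.

Definition add_edge (T : finType) (e : rel T) (x y : T) : rel T :=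
  [rel a b | e a b || ((a == x) && (b == y)) || ((a == y) && (b == x))].

Definition maximal_outerplanar (T : finType) (e : rel T) : Prop :=
  [/\ simple_graph e, outerplanar e &
      forall x y : T, x != y -> ~~ e x y -> ~ outerplanar (add_edge e x y)].

(* uv is an edge on the outer face of the embedding given by s:
   u and v are cyclically consecutive in s. *)
Definition outer_edge (T : finType) (s : seq T) (u v : T) : Prop :=
  u \in s /\ v \in s /\
  ((index v s == (index u s).+1 %% size s) \/ (index u s == (index v s).+1 %% size s)).

Definition in_arc (i j p : nat) : bool :=
  if i < j then (i < p) && (p < j) else (i < p) || (p < j).

(* Vertex set of the segment G_u(uv), with w = Delta(uv): u, w, and the vertices
   on the side of the chord uw not containing v. *)
Definition segment (T : finType) (s : seq T) (u w v : T) : {set T} :=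
  let iu := index u s in let iw := index w s in let iv := index v s in
  u |: (w |: [set x | if in_arc iu iw iv then in_arc iw iu (index x s)
                      else in_arc iu iw (index x s)]).

Definition is_vc (T : finType) (e : rel T) (S X C : {set T}) : bool :=
  [&& X \subset C, C \subset S &
      [forall x, forall y, [&& x \in S, y \in S & e x y] ==> (x \in C) || (y \in C)]].

(* mvc_X(G[S]): minimum size of a vertex cover of G[S] containing X. *)
Definition mvc (T : finType) (e : rel T) (S X : {set T}) : nat :=
  \big[minn/#|S|]_(C : {set T} | is_vc e S X C) #|C|.

(* Main.v *)
Require Import Defs.
From mathcomp Require Import all_boot zify.
Set Implicit Arguments. Unset Strict Implicit. Unset Printing Implicit Defensive.

Lemma bigmin_le (I : eqType) (r : seq I) (P : pred I) (F : I -> nat) x0 i :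
  i \in r -> P i -> \big[minn/x0]_(j <- r | P j) F j <= F i.
Proof.
elim: r => [|j r IH] //=. rewrite inE big_cons.
case/orP=> [/eqP->|ir] Pi; first by rewrite Pi geq_minl.
case: (P j); last exact: IH.
by rewrite geq_min IH ?orbT.
Qed.

Lemma mvc_le (T : finType) (e : rel T) (S X C : {set T}) : is_vc e S X C -> mvc e S X <= #|C|.
Proof. move=> H; rewrite /mvc; apply: bigmin_le => //; exact: mem_index_enum. Qed.

Lemma is_vc_self (T : finType) (e : rel T) (S X : {set T}) : X \subset S -> is_vc e S X S.
Proof.
move=> XS; rewrite /is_vc XS subxx /=; apply/forallP=> x; apply/forallP=> y.
by apply/implyP=> /and3P[-> _ _].
Qed.

Lemma mvc_att (T : finType) (e : rel T) (S X : {set T}) : X \subset S ->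
  exists C, is_vc e S X C /\ #|C| = mvc e S X.
Proof.
move=> XS; rewrite /mvc.
apply: (big_ind (fun m => exists C, is_vc e S X C /\ #|C| = m)).
- by exists S; split=> //; exact: is_vc_self.
- move=> a b [A [HA <-]] [B [HB <-]].
  case: (leqP #|A| #|B|) => h; [exists A | exists B]; split=> //; lia.
- move=> C HC; by exists C.
Qed.

Definition good (T : finType) (e : rel T) (Gu Gv : {set T}) (u v w : T) : Prop :=
 [/\ u \in Gu, w \in Gu, v \in Gv & w \in Gv] /\
     (forall x, x \in Gu -> x \in Gv -> x = w) /\
     (forall x y, e x y -> (x \in Gu /\ y \in Gu) \/ (x \in Gv /\ y \in Gv)
                       \/ (x = u /\ y = v) \/ (x = v /\ y = u)).

Lemma good_sym (T : finType) (e : rel T) (Gu Gv : {set T}) (u v w : T) :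
  good e Gu Gv u v w -> good e Gv Gu v u w.
Proof.
case=> [[h1 h2 h3 h4] [h5 h6]]; split=> //; split.
- by move=> x a b; apply: h5.
- move=> x y /h6; tauto.
Qed.

Lemma vcP (T : finType) (e : rel T) (S X C : {set T}) :
  is_vc e S X C <-> [/\ X \subset C, C \subset S &
     forall x y, x \in S -> y \in S -> e x y -> (x \in C) || (y \in C)].
Proof.
rewrite /is_vc; split.
- case/and3P=> h1 h2 /forallP h3; split=> // x y xS yS exy.
  by move: (h3 x) => /forallP /(_ y) /implyP; apply; rewrite xS yS exy.
- case=> h1 h2 h3; rewrite h1 h2 /=; apply/forallP=> x; apply/forallP=> y.
  by apply/implyP=> /and3P[a b c]; apply: h3.
Qed.

Lemma restrict (T : finType) (e : rel T) (X C S X' : {set T}) :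
  is_vc e setT X C -> X' \subset C :&: S -> is_vc e S X' (C :&: S).
Proof.
move=> /vcP[_ _ h] hX; apply/vcP; split=> //; first exact: subsetIr.
move=> x y xS yS exy; rewrite !inE xS yS !andbT; exact: h.
Qed.

Lemma glue (T : finType) (e : rel T) (Gu Gv : {set T}) (u v w : T) (XA XD A D C X : {set T}) :
  good e Gu Gv u v w -> is_vc e Gu XA A -> is_vc e Gv XD D ->
  (u \in C) || (v \in C) -> A \subset C -> D \subset C -> X \subset C ->
  is_vc e setT X C.
Proof.
move=> [_ [_ h6]] /vcP[_ _ hA] /vcP[_ _ hD] huv sA sD sX.
apply/vcP; split=> //; try by apply/subsetP=> ? _; rewrite inE.
move=> x y _ _ /[dup] exy /h6 [[xG yG]|[[xG yG]|[[-> ->]|[-> ->]]]] //.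
- by case/orP: (hA x y xG yG exy) => h; rewrite (subsetP sA _ h) ?orbT.
- by case/orP: (hD x y xG yG exy) => h; rewrite (subsetP sD _ h) ?orbT.
- by rewrite orbC.
Qed.

Lemma card_split (T : finType) (e : rel T) (Gu Gv : {set T}) (u v w : T) (C : {set T}) :
  good e Gu Gv u v w -> #|C :&: Gu| + #|C :&: Gv| <= #|C| + (w \in C).
Proof.
move=> [_ [h5 _]].
rewrite -cardsUI; apply: leq_add.
  by apply: subset_leq_card; apply/subsetP=> x; rewrite !inE => /orP[/andP[->]|/andP[->]].
have : #|(C :&: Gu) :&: (C :&: Gv)| <= (w \in C).
  case wC: (w \in C).
    rewrite /= -(cards1 w); apply: subset_leq_card; apply/subsetP=> x.
    by rewrite !inE => /andP[/andP[_ a] /andP[_ b]]; rewrite (h5 x a b).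
  rewrite leqn0 cards_eq0; apply/eqP/setP=> x; rewrite !inE.
  apply/negP=> /andP[/andP[xc a] /andP[_ b]]; move: (h5 x a b) xc wC => ->.
  by move=> ->.
by [].
Qed.

Lemma vc0 (T : finType) (e : rel T) (S X C : {set T}) : is_vc e S X C -> is_vc e S set0 C.
Proof. by case/vcP=> _ h1 h2; apply/vcP; split=> //; exact: sub0set. Qed.

Lemma cardU_le (T : finType) (A B : {set T}) : #|A :|: B| <= #|A| + #|B|.
Proof. rewrite -cardsUI; exact: leq_addr. Qed.

Lemma cardU_lew (T : finType) (A B : {set T}) w : w \in A -> w \in B ->
  #|A :|: B| + 1 <= #|A| + #|B|.
Proof.
move=> wA wB; rewrite -cardsUI leq_add2l card_gt0; apply/set0Pn; exists w.
by rewrite inE wA wB.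
Qed.

Lemma vc_edge (T : finType) (e : rel T) (S X C : {set T}) x y :
  is_vc e S X C -> x \in S -> y \in S -> e x y -> (x \in C) || (y \in C).
Proof. by case/vcP=> _ _ h; apply: h. Qed.

Lemma vc_sub (T : finType) (e : rel T) (S X C : {set T}) x :
  is_vc e S X C -> x \in X -> x \in C.
Proof. by case/vcP=> h _ _ /(subsetP h). Qed.

Lemma claim1 (T : finType) (e : rel T) (Gu Gv : {set T}) (u v w : T) :
  symmetric e -> good e Gu Gv u v w -> e u v -> e u w -> e v w ->
  mvc e setT set0 = mvc e Gu set0 + mvc e Gv set0 ->
  mvc e setT [set u] =
   minn (minn (mvc e Gu [set u] + mvc e Gv set0) (mvc e Gu set0 + mvc e Gv [set w]))
        (mvc e setT set0 + 1).
Proof.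
move=> esym /[dup] hg [[uGu wGu vGv wGv] [hI hE]] euv euw evw hM.
have s0 := @sub0set T.
have [A0 [vA0 cA0]] := mvc_att e (s0 Gu).
have uG1 : [set u] \subset Gu by rewrite sub1set.
have [Au [vAu cAu]] := mvc_att e uG1.
have [D0 [vD0 cD0]] := mvc_att e (s0 Gv).
have wG1 : [set w] \subset Gv by rewrite sub1set.
have [Dw [vDw cDw]] := mvc_att e wG1.
have [C0 [vC0 cC0]] := mvc_att e (s0 [set: T]).
have uT1 : [set u] \subset [set: T] by apply/subsetP=> ? _; rewrite inE.
have [C1 [vC1 cC1]] := mvc_att e uT1.
have ub1 : mvc e setT [set u] <= #|Au :|: D0|.
  apply: mvc_le; apply: (glue hg vAu vD0).
  - by rewrite inE (vc_sub vAu (set11 u)).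
  - exact: subsetUl. - exact: subsetUr.
  - by rewrite sub1set inE (vc_sub vAu (set11 u)).
have ub2 : mvc e setT [set u] <= #|u |: (A0 :|: Dw)|.
  apply: mvc_le; apply: (glue hg vA0 vDw).
  - by rewrite setU11.
  - by apply: subset_trans (subsetUl _ _) (subsetUr _ _).
  - by apply: subset_trans (subsetUr _ _) (subsetUr _ _).
  - by rewrite sub1set setU11.
have ub3 : mvc e setT [set u] <= #|u |: C0|.
  apply: mvc_le; apply: (glue hg (restrict (S:=Gu) vC0 (sub0set _))
                             (restrict (S:=Gv) vC0 (sub0set _))).
  - by rewrite setU11.
  - by apply: subset_trans (subsetIl _ _) (subsetUr _ _).
  - by apply: subset_trans (subsetIl _ _) (subsetUr _ _).
  - by rewrite sub1set setU11.
have h2 : #|u |: (A0 :|: Dw)| <= #|A0| + #|Dw|.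
  rewrite cardsU1; case/orP: (vc_edge vA0 uGu wGu euw) => h.
    by rewrite inE h /= cardU_le.
  have := cardU_lew h (vc_sub vDw (set11 w)).
  move: (leq_b1 (u \notin A0 :|: Dw)); clear; lia.
have h3 : #|u |: C0| <= #|C0| + 1.
  by rewrite cardsU1; move: (leq_b1 (u \notin C0)); clear; lia.
have h1 := cardU_le Au D0.
have uC1 : u \in C1 := vc_sub vC1 (set11 u).
have lAu : mvc e Gu [set u] <= #|C1 :&: Gu|.
  by apply: mvc_le; apply: (restrict vC1); rewrite sub1set inE uC1 uGu.
have lA0 : mvc e Gu set0 <= #|C1 :&: Gu|.
  by apply: mvc_le; apply: (restrict vC1); exact: sub0set.
have lD0 : mvc e Gv set0 <= #|C1 :&: Gv|.
  by apply: mvc_le; apply: (restrict vC1); exact: sub0set.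
have lM : mvc e setT set0 <= #|C1| by apply: mvc_le (vc0 vC1).
have hs := card_split C1 hg.
case wC: (w \in C1) hs => /= hs.
  have lDw : mvc e Gv [set w] <= #|C1 :&: Gv|.
    by apply: mvc_le; apply: (restrict vC1); rewrite sub1set inE wC wGv.
  move: ub1 ub2 ub3 h1 h2 h3 cA0 cAu cD0 cDw cC0 cC1 lAu lA0 lD0 lM hs lDw hM.
  clear; lia.
move: ub1 ub2 ub3 h1 h2 h3 cA0 cAu cD0 cDw cC0 cC1 lAu lA0 lD0 lM hs hM.
clear; lia.
Qed.

Lemma vcX (T : finType) (e : rel T) (S X Y C : {set T}) :
  is_vc e S X C -> Y \subset C -> is_vc e S Y C.
Proof. by case/vcP=> _ h1 h2 hY; apply/vcP; split. Qed.

Lemma claim3 (T : finType) (e : rel T) (Gu Gv : {set T}) (u v w : T) :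
  symmetric e -> good e Gu Gv u v w -> e u v -> e u w -> e v w ->
  mvc e setT set0 = mvc e Gu set0 + mvc e Gv set0 ->
  mvc e setT [set u; v] =
    minn (mvc e Gu [set u] + mvc e Gv [set v]) (mvc e setT set0 + 1).
Proof.
move=> esym /[dup] hg [[uGu wGu vGv wGv] [hI hE]] euv euw evw hM.
have s0 := @sub0set T.
have inT : forall x : T, x \in [set: T] by move=> x; rewrite inE.
have [A0 [vA0 cA0]] := mvc_att e (s0 Gu).
have uG1 : [set u] \subset Gu by rewrite sub1set.
have [Au [vAu cAu]] := mvc_att e uG1.
have [D0 [vD0 cD0]] := mvc_att e (s0 Gv).
have vG1 : [set v] \subset Gv by rewrite sub1set.
have [Dv [vDv cDv]] := mvc_att e vG1.
have [C0 [vC0 cC0]] := mvc_att e (s0 [set: T]).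
have uvT : [set u; v] \subset [set: T] by apply/subsetP=> ? _; rewrite inE.
have [C3 [vC3 cC3]] := mvc_att e uvT.
have uAu := vc_sub vAu (set11 u).
have vinDv := vc_sub vDv (set11 v).
have ub1 : mvc e setT [set u; v] <= #|Au :|: Dv|.
  apply: mvc_le; apply: (glue hg vAu vDv).
  - by rewrite inE uAu.
  - exact: subsetUl. - exact: subsetUr.
  - by apply/subsetP=> x; rewrite !inE => /orP[]/eqP->; rewrite ?uAu ?vinDv ?orbT.
have ub2 : mvc e setT [set u; v] <= #|u |: (v |: C0)|.
  apply: mvc_le; apply: (glue hg (restrict (S:=Gu) vC0 (sub0set _))
                             (restrict (S:=Gv) vC0 (sub0set _))).
  - by rewrite setU11.
  - by apply: subset_trans (subsetIl _ _) _; apply/subsetP=> x xC; rewrite !inE xC !orbT.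
  - by apply: subset_trans (subsetIl _ _) _; apply/subsetP=> x xC; rewrite !inE xC !orbT.
  - by apply/subsetP=> x; rewrite !inE => /orP[]/eqP->; rewrite eqxx ?orbT.
have h2 : #|u |: (v |: C0)| <= #|C0| + 1.
  rewrite !cardsU1 !inE.
  case/orP: (vc_edge vC0 (inT u) (inT v) euv) => ->; rewrite ?orbT /=;
    move: (leq_b1 (u != v)) (leq_b1 (v \notin C0)); clear; lia.
have h1 := cardU_le Au Dv.
have uC3 : u \in C3 by apply: (vc_sub vC3); rewrite !inE eqxx.
have vinC3 : v \in C3 by apply: (vc_sub vC3); rewrite !inE eqxx orbT.
have lAu : mvc e Gu [set u] <= #|C3 :&: Gu|.
  by apply: mvc_le; apply: (restrict vC3); rewrite sub1set inE uC3 uGu.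
have lA0 : mvc e Gu set0 <= #|C3 :&: Gu|.
  by apply: mvc_le; apply: (restrict vC3); exact: sub0set.
have lDv : mvc e Gv [set v] <= #|C3 :&: Gv|.
  by apply: mvc_le; apply: (restrict vC3); rewrite sub1set inE vinC3 vGv.
have lD0 : mvc e Gv set0 <= #|C3 :&: Gv|.
  by apply: mvc_le; apply: (restrict vC3); exact: sub0set.
have lM : mvc e setT set0 <= #|C3| by apply: mvc_le (vc0 vC3).
have hs := card_split C3 hg.
case wC: (w \in C3) hs => /= hs; last first.
  move: ub1 ub2 h1 h2 cA0 cAu cD0 cDv cC0 cC3 lAu lA0 lD0 lDv lM hs hM.
  clear; lia.
have F1 : mvc e Gv [set v] <= mvc e Gv set0 \/
          mvc e setT set0 + 1 <= #|C3 :&: Gu| + mvc e Gv set0.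
  case vD: (v \in D0).
    by left; rewrite -cD0; apply: mvc_le; apply: (vcX vD0); rewrite sub1set.
  right; have wD : w \in D0.
    by case/orP: (vc_edge vD0 vGv wGv evw) => //; rewrite vD.
  have := cardU_lew (_ : w \in C3 :&: Gu) wD; rewrite inE wC wGu => /(_ isT).
  rewrite cD0; apply: leq_trans; rewrite leq_add2r.
  apply: mvc_le; apply: (glue hg (restrict (S:=Gu) vC3 (sub0set _)) vD0).
  - by rewrite !inE uC3 uGu.
  - exact: subsetUl. - exact: subsetUr. - exact: sub0set.
have F2 : mvc e Gu [set u] <= mvc e Gu set0 \/
          mvc e setT set0 + 1 <= mvc e Gu set0 + #|C3 :&: Gv|.
  case uA: (u \in A0).
    by left; rewrite -cA0; apply: mvc_le; apply: (vcX vA0); rewrite sub1set.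
  right; have wA : w \in A0.
    by case/orP: (vc_edge vA0 uGu wGu euw) => //; rewrite uA.
  have := cardU_lew wA (_ : w \in C3 :&: Gv); rewrite inE wC wGv => /(_ isT).
  rewrite cA0; apply: leq_trans; rewrite leq_add2r.
  apply: mvc_le; apply: (glue hg vA0 (restrict (S:=Gv) vC3 (sub0set _))).
  - by rewrite !inE vinC3 vGv !orbT.
  - exact: subsetUl. - exact: subsetUr. - exact: sub0set.
move: ub1 ub2 h1 h2 cA0 cAu cD0 cDv cC0 cC3 lAu lA0 lD0 lDv lM hs hM F1 F2.
clear; lia.
Qed.

Lemma in_arcE i j p : in_arc i j p =
  ((i < j) && (i < p) && (p < j)) || ((j <= i) && ((i < p) || (p < j))).
Proof. rewrite /in_arc; case: ltnP => h /=; rewrite ?andbT ?orbF //; by rewrite -andbA. Qed.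

Lemma cross (T : finType) (e : rel T) (s : seq T) p q r t :
  symmetric e -> outerplanar_order e s -> e p r -> e q t ->
  let a := index p s in let b := index q s in let c := index r s in let d := index t s in
  (a < b < c) && (c < d) || (b < c < d) && (d < a) || (c < d < a) && (a < b) ||
  (d < a < b) && (b < c) -> False.
Proof.
move=> esym [_ _ H] epr eqt /=.
case/orP=> [/orP[/orP[|]|]|]; move/andP=> [/andP[h1 h2] h3].
all: try (exact: H h1 h2 h3 epr eqt).
all: try (by move: (H t p q r h1 h2 h3); rewrite (esym t q); apply).
all: try (apply: (H q r t p h1 h2 h3 eqt); rewrite esym; exact: epr).
all: try (by move: (H r t p q h1 h2 h3); rewrite (esym r p) (esym t q); apply).
Qed.

Lemma struct (T : finType) (e : rel T) (s : seq T) u v w :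
  symmetric e -> irreflexive e -> outerplanar_order e s ->
  index v s = (index u s).+1 %% size s ->
  e u v -> e u w -> e v w ->
  good e (segment s u w v) (segment s v w u) u v w.
Proof.
move=> esym eirr /[dup] hs [us alls _] hv euv euw evw.
have ltI : forall x, index x s < size s by move=> x; rewrite index_mem.
have eqI : forall x y, (x == y) = (index x s == index y s).
  move=> x y; apply/eqP/eqP => [->//|h].
  by rewrite -(nth_index x (alls x)) h (nth_index x (alls y)).
have neq : forall x y, e x y -> index x s != index y s.
  by move=> x y exy; rewrite -eqI; apply/eqP=> h; rewrite h eirr in exy.
have nuv := neq _ _ euv; have nuw := neq _ _ euw; have nvw := neq _ _ evw.
have luv := ltI u; have lvv := ltI v; have lw := ltI w.
have hv' : index v s = (index u s).+1 \/ ((index u s).+1 = size s /\ index v s = 0).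
  case: (ltnP (index u s).+1 (size s)) => h.
    by left; rewrite hv modn_small.
  right; have e1 : (index u s).+1 = size s by lia.
  by split=> //; rewrite hv e1 modnn.
have a1 : in_arc (index u s) (index w s) (index v s).
  rewrite in_arcE; move: nuv nuw nvw luv lvv lw hv'; clear; lia.
have a2 : in_arc (index v s) (index w s) (index u s) = false.
  apply/negbTE; rewrite in_arcE; move: nuv nuw nvw luv lvv lw hv'; clear; lia.
set Gu := segment s u w v; set Gv := segment s v w u.
have hGu : forall x, (x \in Gu) = [|| index x s == index u s, index x s == index w s |
                                  in_arc (index w s) (index u s) (index x s)].
  by move=> x; rewrite /Gu /segment !inE a1 -!eqI.
have hGv : forall x, (x \in Gv) = [|| index x s == index v s, index x s == index w s |
                                  in_arc (index v s) (index w s) (index x s)].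
  by move=> x; rewrite /Gv /segment !inE a2 -!eqI.
have cov : forall z, (z \in Gu) || (z \in Gv).
  move=> z; rewrite hGu hGv !in_arcE; move: (ltI z) nuv nuw nvw luv lvv lw hv'.
  clear; lia.
have key : forall x y, x \in Gu -> x != w -> y \in Gv -> y != w -> e x y -> x = u /\ y = v.
  move=> x y; rewrite hGu hGv !eqI => hx xw hy yw exy.
  case: (eqVneq (index y s) (index v s)) => [yv|yv].
    have yv' : y = v by apply/eqP; rewrite eqI yv.
    subst y.
    case: (eqVneq (index x s) (index u s)) => [xu|xu].
      by split=> //; apply/eqP; rewrite eqI xu.
    exfalso; apply: (cross esym hs euw (_ : e v x)); first by rewrite esym.
    rewrite /= !in_arcE in hx *; move: (ltI x) hx xw xu nuv nuw nvw luv lvv lw hv'.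
    clear; lia.
  exfalso; apply: (cross esym hs evw (_ : e y x)); first by rewrite esym.
  rewrite /= !in_arcE in hx hy *; move: (ltI x) (ltI y) hx hy xw yw yv nuv nuw nvw luv lvv lw hv'.
  clear; lia.
have uGu : u \in Gu by rewrite hGu eqxx.
have wGu : w \in Gu by rewrite hGu eqxx orbT.
have vGv : v \in Gv by rewrite hGv eqxx.
have wGv : w \in Gv by rewrite hGv eqxx orbT.
split; first by split.
split.
  move=> x; rewrite hGu hGv !in_arcE => hx hy; apply/eqP; rewrite eqI.
  move: (ltI x) hx hy nuv nuw nvw luv lvv lw hv'; clear; lia.
move=> x y exy.
case/orP: (cov x) => hx; case/orP: (cov y) => hy.
- by left.
- case: (eqVneq x w) => [xw|xw]; first by right; left; rewrite xw.
  case: (eqVneq y w) => [yw|yw]; first by left; rewrite yw.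
  by have [-> ->] := key x y hx xw hy yw exy; right; right; left.
- case: (eqVneq y w) => [yw|yw]; first by right; left; rewrite yw.
  case: (eqVneq x w) => [xw|xw]; first by left; rewrite xw.
  have eyx : e y x by rewrite esym.
  have [-> ->] := key y x hy yw hx xw eyx.
  by right; right; right.
- by right; left.
Qed.

Theorem lemma3 (T : finType) (e : rel T) (s : seq T) (u v w : T) :
  4 <= #|T| ->
  maximal_outerplanar e ->
  outerplanar_order e s ->
  outer_edge s u v -> e u v ->
  2 < deg e u -> 2 < deg e v ->
  e u w -> e v w ->
  let Gu := segment s u w v in
  let Gv := segment s v w u in
  mvc e setT set0 = mvc e Gu set0 + mvc e Gv set0 ->
  [/\ mvc e setT [set u] =
        minn (minn (mvc e Gu [set u] + mvc e Gv set0) (mvc e Gu set0 + mvc e Gv [set w]))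
             (mvc e setT set0 + 1),
      mvc e setT [set v] =
        minn (minn (mvc e Gu set0 + mvc e Gv [set v]) (mvc e Gu [set w] + mvc e Gv set0))
             (mvc e setT set0 + 1) &
      mvc e setT [set u; v] =
        minn (mvc e Gu [set u] + mvc e Gv [set v]) (mvc e setT set0 + 1)].
Proof.
move=> _ [[esym eirr] _ _] hs [_ [_ hout]] euv _ _ euw evw Gu Gv hM.
have evu : e v u by rewrite esym.
have hg : good e Gu Gv u v w.
  case: hout => /eqP h; first exact: struct.
  by apply: good_sym; apply: struct.
have hM' : mvc e setT set0 = mvc e Gv set0 + mvc e Gu set0 by rewrite addnC.
split.
- exact: claim1 esym hg euv euw evw hM.
- rewrite (claim1 esym (good_sym hg) evu evw euw hM'); clear; lia.
- exact: claim3 esym hg euv euw evw hM.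
Qed.
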